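(* Let $\mathcal U$ be a finite set, $P$ a probability distribution on $\mathcal U$ with $P(u)>0$ for all $u$, and $d\ge2$ an integer. Let $l:\mathcal U\to\mathbb{N}$ be the codeword lengths of a uniquely decodable $d$-ary code satisfying $$l(u)\ \ge\ \left\lceil \log_d\frac{1}{P(u)}\right\rceil\quad\text{for all }u\in\mathcal U.$$ With $c_{d,l}=\sum_u d^{-l(u)}$, $Q_{d,l}(u)=d^{-l(u)}/c_{d,l}$, and average redundancy $\Delta_d=\sum_u P(u)l(u)+\sum_u P(u)\log_d P(u)$, we have $$J(P,Q_{d,l})\le\frac{\Delta_d\log d}{2}\qquad\text{and}\qquad \sum_{u\in\mathcal U}\big|P(u)-Q_{d,l}(u)\big|\ \le\ 2\,\varepsilon\!\left(\frac{\Delta_d\log d}{2}\right),$$ where for $x\ge0$, $\varepsilon(x)$ denotes the unique $\varepsilon\in[0,1)$ solving $\varepsilon\log\frac{1+\varepsilon}{1-\varepsilon}=x$.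
   Context: Jeffreys' divergence is $J(P,Q)=\frac{D(P\|Q)+D(Q\|P)}{2}$ with $D(P\|Q)=\sum_x P(x)\log\frac{P(x)}{Q(x)}$; $\log$ denotes the natural logarithm and $\log_d$ the base-$d$ logarithm. *)

(* Defs.v *)
From Stdlib Require Import Reals Lra Lia List ClassicalEpsilon.
Open Scope R_scope.

(* The finite alphabet U is represented as {0, ..., n-1}. *)
Definition sumU (n : nat) (f : nat -> R) : R :=
  fold_right Rplus 0 (map f (seq 0 n)).

Definition logb (d : nat) (x : R) : R := ln x / ln (INR d).

(* ceiling: ceil x = - floor (- x), floor y = up y - 1 *)
Definition ceilR (x : R) : Z := (1 - up (- x))%Z.

Definition is_dary_code (d n : nat) (c : nat -> list nat) : Prop :=
  forall u, (u < n)%nat -> forall s, In s (c u) -> (s < d)%nat.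

Definition uniquely_decodable (n : nat) (c : nat -> list nat) : Prop :=
  forall xs ys : list nat,
    Forall (fun u => (u < n)%nat) xs -> Forall (fun u => (u < n)%nat) ys ->
    concat (map c xs) = concat (map c ys) -> xs = ys.

Definition KL (n : nat) (P Q : nat -> R) : R :=
  sumU n (fun u => P u * ln (P u / Q u)).

Definition Jeff (n : nat) (P Q : nat -> R) : R :=
  (KL n P Q + KL n Q P) / 2.

Definition c_dl (n d : nat) (l : nat -> nat) : R :=
  sumU n (fun u => / (INR d ^ l u)).

Definition Q_dl (n d : nat) (l : nat -> nat) (u : nat) : R :=
  (/ (INR d ^ l u)) / c_dl n d l.

Definition redundancy (n d : nat) (P : nat -> R) (l : nat -> nat) : R :=
  sumU n (fun u => P u * INR (l u)) + sumU n (fun u => P u * logb d (P u)).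

Definition eps_spec (x e : R) : Prop :=
  0 <= e < 1 /\ e * ln ((1 + e) / (1 - e)) = x.

Definition eps_fun (x : R) : R := epsilon (inhabits 0) (eps_spec x).

(* Main.v *)
Require Import Defs.
From Stdlib Require Import Reals List.
From Stdlib Require Import Lra Lia ClassicalEpsilon Ranalysis5.
From Coquelicot Require Import Coquelicot.
Open Scope R_scope.

Lemma fr_shift (L : list R) a : fold_right Rplus a L = fold_right Rplus 0 L + a.
Proof. induction L; simpl; [ring | rewrite IHL; ring]. Qed.

Lemma sumU_0 f : sumU 0 f = 0.
Proof. reflexivity. Qed.

Lemma sumU_S n f : sumU (S n) f = sumU n f + f n.
Proof. unfold sumU. rewrite seq_S, map_app, fold_right_app. simpl. rewrite fr_shift. ring. Qed.

Lemma sumU_le n f g : (forall u, (u < n)%nat -> f u <= g u) -> sumU n f <= sumU n g.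
Proof. induction n; intros H. rewrite !sumU_0; lra.
  rewrite !sumU_S. apply Rplus_le_compat. apply IHn; intros; apply H; lia. apply H; lia. Qed.

Lemma sumU_ext n f g : (forall u, (u < n)%nat -> f u = g u) -> sumU n f = sumU n g.
Proof. induction n; intros H. reflexivity.
  rewrite !sumU_S. rewrite IHn, H. reflexivity. lia. intros; apply H; lia. Qed.

Lemma sumU_plus n f g : sumU n (fun u => f u + g u) = sumU n f + sumU n g.
Proof. induction n. rewrite !sumU_0; ring. rewrite !sumU_S, IHn; ring. Qed.

Lemma sumU_scal n k f : sumU n (fun u => k * f u) = k * sumU n f.
Proof. induction n. rewrite !sumU_0; ring. rewrite !sumU_S, IHn; ring. Qed.

Lemma sumU_nonneg n f : (forall u, (u < n)%nat -> 0 <= f u) -> 0 <= sumU n f.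
Proof. induction n; intros H. rewrite sumU_0; lra.
  rewrite sumU_S. assert (0 <= f n) by (apply H; lia).
  assert (0 <= sumU n f) by (apply IHn; intros; apply H; lia). lra. Qed.

Lemma sumU_pos n f : (0 < n)%nat -> (forall u, (u < n)%nat -> 0 < f u) -> 0 < sumU n f.
Proof. intros Hn H. destruct n. lia. rewrite sumU_S.
  assert (0 <= sumU n f) by (apply sumU_nonneg; intros; left; apply H; lia).
  assert (0 < f n) by (apply H; lia). lra. Qed.

Lemma sel_lin n (s : nat -> bool) (P Q : nat -> R) a b g h :
  sumU n (fun u => if s u then a * P u + b * Q u else g * P u + h * Q u) =
  a * sumU n (fun u => if s u then P u else 0) + b * sumU n (fun u => if s u then Q u else 0)
  + g * sumU n (fun u => if s u then 0 else P u) + h * sumU n (fun u => if s u then 0 else Q u).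
Proof. induction n. rewrite !sumU_0; ring. rewrite !sumU_S, IHn. destruct (s n); ring. Qed.

Lemma sel_split n (s : nat -> bool) (P : nat -> R) :
  sumU n P = sumU n (fun u => if s u then P u else 0) + sumU n (fun u => if s u then 0 else P u).
Proof. induction n. rewrite !sumU_0; ring. rewrite !sumU_S, IHn. destruct (s n); ring. Qed.

Lemma sel_pos_ex n (s : nat -> bool) (f : nat -> R) :
  0 < sumU n (fun u => if s u then f u else 0) -> exists u, (u < n)%nat /\ s u = true.
Proof. induction n; intros H. rewrite sumU_0 in H; lra.
  rewrite sumU_S in H. destruct (s n) eqn:E. exists n; split; auto.
  destruct IHn as [u [Hu Hs]]. lra. exists u; split; auto. Qed.

Lemma sel_pos_ex' n (s : nat -> bool) (f : nat -> R) :
  0 < sumU n (fun u => if s u then 0 else f u) -> exists u, (u < n)%nat /\ s u = false.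
Proof. induction n; intros H. rewrite sumU_0 in H; lra.
  rewrite sumU_S in H. destruct (s n) eqn:E.
  destruct IHn as [u [Hu Hs]]. lra. exists u; split; auto. exists n; split; auto. Qed.

Lemma sel_ex_pos n (s : nat -> bool) (f : nat -> R) :
  (forall u, (u < n)%nat -> 0 < f u) -> (exists u, (u < n)%nat /\ s u = true) ->
  0 < sumU n (fun u => if s u then f u else 0).
Proof. intros Hf [u [Hu Hs]]. induction n. lia. rewrite sumU_S.
  assert (Hnn : 0 <= sumU n (fun u => if s u then f u else 0)).
  { apply sumU_nonneg; intros v Hv; destruct (s v); [left; apply Hf; lia | lra]. }
  destruct (Nat.eq_dec u n). subst. rewrite Hs. assert (0 < f n) by (apply Hf; lia). lra.
  assert (0 < sumU n (fun u => if s u then f u else 0)). apply IHn; intros; try apply Hf; lia.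
  destruct (s n). assert (0 < f n) by (apply Hf; lia). lra. lra. Qed.

Lemma sel_ex_pos' n (s : nat -> bool) (f : nat -> R) :
  (forall u, (u < n)%nat -> 0 < f u) -> (exists u, (u < n)%nat /\ s u = false) ->
  0 < sumU n (fun u => if s u then 0 else f u).
Proof. intros Hf Hex.
  replace (sumU n (fun u => if s u then 0 else f u)) with
    (sumU n (fun u => if negb (s u) then f u else 0)).
  apply sel_ex_pos; auto. destruct Hex as [u [Hu Hs]]; exists u; rewrite Hs; auto.
  apply sumU_ext; intros; destruct (s u); reflexivity. Qed.

Lemma ln_le' x y : 0 < x -> x <= y -> ln x <= ln y.
Proof. intros Hx [H|H]. left; apply ln_increasing; auto. subst; lra. Qed.

Lemma ln_le_sub1 y : 0 < y -> ln y <= y - 1.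
Proof. intros Hy. pose proof (exp_ineq1_le (ln y)). rewrite exp_ln in H; lra. Qed.

Lemma div_le A B C D : 0 < B -> 0 < D -> A * D <= C * B -> A / B <= C / D.
Proof. intros HB HD H. unfold Rdiv. apply (Rmult_le_reg_r (B * D)). nra.
  replace (A * / B * (B * D)) with (A * D) by (field; lra).
  replace (C * / D * (B * D)) with (C * B) by (field; lra). lra. Qed.

Lemma div_lt A B C D : 0 < B -> 0 < D -> A * D < C * B -> A / B < C / D.
Proof. intros HB HD H. unfold Rdiv. apply (Rmult_lt_reg_r (B * D)). nra.
  replace (A * / B * (B * D)) with (A * D) by (field; lra).
  replace (C * / D * (B * D)) with (C * B) by (field; lra). lra. Qed.

Definition fe (e : R) := e * ln ((1 + e) / (1 - e)).

Lemma Lratio_ge1 a : 0 <= a < 1 -> 1 <= (1 + a) / (1 - a).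
Proof. intros H. assert (1 / 1 <= (1 + a) / (1 - a)) by (apply div_le; lra).
  replace (1/1) with 1 in H0 by field. auto. Qed.

Lemma fe_mono a b : 0 <= a -> a < b -> b < 1 -> fe a < fe b.
Proof. intros Ha Hab Hb. unfold fe.
  assert (R1 : (1 + a) / (1 - a) < (1 + b) / (1 - b)) by (apply div_lt; nra).
  assert (G : 1 <= (1 + a) / (1 - a)) by (apply Lratio_ge1; lra).
  assert (L1 : ln ((1 + a) / (1 - a)) < ln ((1 + b) / (1 - b))) by (apply ln_increasing; lra).
  assert (L0 : 0 <= ln ((1 + a) / (1 - a))) by (rewrite <- ln_1; apply ln_le'; lra).
  nra. Qed.

Lemma fe_cont x a : 0 <= a < 1 -> continuity_pt (fun e => e * ln ((1+e)/(1-e)) - x) a.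
Proof. intros H. apply continuity_pt_filterlim.
  apply (ex_derive_continuous (fun e => e * ln ((1+e)/(1-e)) - x)). auto_derive.
  split. lra. split; auto. apply Rdiv_lt_0_compat; lra. Qed.

Lemma eps_exists x : 0 <= x -> exists e, eps_spec x e.
Proof. intros Hx. destruct (Req_dec x 0) as [E|E].
  { exists 0. subst. split. lra. ring. }
  set (K := exp (2 * x + 2) + 1).
  assert (HE : 1 + (2 * x + 2) <= exp (2 * x + 2)) by apply exp_ineq1_le.
  assert (HK : 4 <= K) by (unfold K; lra).
  set (e1 := 1 - / K).
  assert (HiK : / K <= / 4) by (apply Rinv_le_contravar; lra).
  assert (HiK0 : 0 < / K) by (apply Rinv_0_lt_compat; lra).
  assert (He1 : 3/4 <= e1 < 1) by (unfold e1; lra).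
  assert (Hrat : (1 + e1) / (1 - e1) = 2 * K - 1) by (unfold e1; field; lra).
  assert (Hln : 2 * x + 2 < ln ((1 + e1) / (1 - e1))).
  { rewrite Hrat. rewrite <- (ln_exp (2*x+2)) at 1. apply ln_increasing.
    apply exp_pos. unfold K. lra. }
  destruct (IVT_interv (fun e => e * ln ((1+e)/(1-e)) - x) 0 e1) as [z [Hz Hfz]].
  - intros a Ha. apply fe_cont. lra.
  - lra.
  - simpl. lra.
  - simpl. nra.
  - exists z. split. lra. simpl in Hfz. lra. Qed.

Lemma ceil_ge y : y <= IZR (ceilR y).
Proof. unfold ceilR. rewrite minus_IZR. destruct (archimed (- y)). simpl. lra. Qed.

Lemma key a b al be : 0 < a -> 0 < b -> 0 < al -> 0 < be ->
  (ln (al / be) + 1 - be / al) * a + (- ln (al / be) + 1 - al / be) * b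
  <= a * ln (a / b) + b * ln (b / a).
Proof. intros Ha Hb Hal Hbe.
  assert (E1 : ln (b / a) = - ln (a / b)).
  { replace (b / a) with (/ (a / b)) by (field; lra). apply ln_Rinv. apply Rdiv_lt_0_compat; lra. }
  assert (E2 : ln (be / al) = - ln (al / be)).
  { replace (be / al) with (/ (al / be)) by (field; lra). apply ln_Rinv. apply Rdiv_lt_0_compat; lra. }
  assert (H1 := ln_le_sub1 (b / a * (al / be))).
  assert (H2 := ln_le_sub1 (a / b * (be / al))).
  rewrite ln_mult in H1, H2; try (apply Rdiv_lt_0_compat; lra).
  assert (P1 : 0 < b / a * (al / be)) by (apply Rmult_lt_0_compat; apply Rdiv_lt_0_compat; lra).
  assert (P2 : 0 < a / b * (be / al)) by (apply Rmult_lt_0_compat; apply Rdiv_lt_0_compat; lra).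
  specialize (H1 P1). specialize (H2 P2).
  rewrite E1 in H1. rewrite E2 in H2.
  apply (Rmult_le_compat_l a) in H1; [|lra]. apply (Rmult_le_compat_l b) in H2; [|lra].
  replace (a * (b / a * (al / be) - 1)) with (b * (al / be) - a) in H1 by (field; lra).
  replace (b * (a / b * (be / al) - 1)) with (a * (be / al) - b) in H2 by (field; lra).
  rewrite E1. nra. Qed.

Theorem mainTheorem8 (n d : nat) (P : nat -> R) (c : nat -> list nat) (l : nat -> nat)
  (Hd : (2 <= d)%nat)
  (HPpos : forall u, (u < n)%nat -> 0 < P u)
  (HPsum : sumU n P = 1)
  (Hcode : is_dary_code d n c)
  (HUD : uniquely_decodable n c)
  (Hlen : forall u, (u < n)%nat -> length (c u) = l u)
  (Hl : forall u, (u < n)%nat -> (ceilR (logb d (/ P u)) <= Z.of_nat (l u))%Z) :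
  Jeff n P (Q_dl n d l) <= redundancy n d P l * ln (INR d) / 2 /\
  sumU n (fun u => Rabs (P u - Q_dl n d l u))
    <= 2 * eps_fun (redundancy n d P l * ln (INR d) / 2).
Proof.
  assert (Hd2 : 2 <= INR d) by (replace 2 with (INR 2) by (simpl; ring); apply le_INR; auto).
  assert (Hlnd : 0 < ln (INR d)) by (rewrite <- ln_1; apply ln_increasing; lra).
  assert (Hn : (0 < n)%nat) by (destruct n; [rewrite sumU_0 in HPsum; lra | lia]).
  assert (Hpow : forall u, 0 < INR d ^ l u) by (intros; apply pow_lt; lra).
  set (cc := c_dl n d l).
  assert (Hcc : 0 < cc).
  { unfold cc, c_dl. apply sumU_pos; auto. intros; apply Rinv_0_lt_compat; auto. }
  set (Q := Q_dl n d l).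
  assert (HQpos : forall u, 0 < Q u).
  { intros u. unfold Q, Q_dl. fold cc. apply Rdiv_lt_0_compat; auto. apply Rinv_0_lt_compat; auto. }
  assert (HQsum : sumU n Q = 1).
  { unfold Q, Q_dl. fold cc.
    rewrite (sumU_ext n _ (fun u => / cc * / INR d ^ l u)) by (intros; unfold Rdiv; ring).
    rewrite sumU_scal. fold (c_dl n d l). fold cc. field. lra. }
  set (a := fun u => ln (P u) + INR (l u) * ln (INR d)).
  assert (Ha : forall u, (u < n)%nat -> 0 <= a u).
  { intros u Hu. unfold a. pose proof (ceil_ge (logb d (/ P u))).
    pose proof (IZR_le _ _ (Hl u Hu)). rewrite <- INR_IZR_INZ in H0.
    assert (H' := Rle_trans _ _ _ H H0). clear H H0. rename H' into H.
    unfold logb in H. rewrite ln_Rinv in H by auto.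
    assert (H1 : - ln (P u) / ln (INR d) * ln (INR d) <= INR (l u) * ln (INR d)).
    { apply Rmult_le_compat_r; lra. }
    replace (- ln (P u) / ln (INR d) * ln (INR d)) with (- ln (P u)) in H1 by (field; lra).
    lra. }
  assert (HlnPQ : forall u, (u < n)%nat -> ln (P u / Q u) = a u + ln cc).
  { intros u Hu. unfold Q, Q_dl. fold cc.
    replace (P u / (/ INR d ^ l u / cc)) with (P u * (INR d ^ l u * cc))
      by (specialize (Hpow u); field; repeat split; lra).
    rewrite ln_mult, ln_mult, ln_pow; auto; try lra. unfold a; ring.
    apply Rmult_lt_0_compat; auto. }
  assert (HlnQP : forall u, (u < n)%nat -> ln (Q u / P u) = - (a u + ln cc)).
  { intros u Hu. rewrite <- HlnPQ by auto.
    replace (Q u / P u) with (/ (P u / Q u)).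
    apply ln_Rinv. apply Rdiv_lt_0_compat; auto.
    specialize (HPpos u Hu); specialize (HQpos u). field; lra. }
  assert (HKL1 : KL n P Q = sumU n (fun u => P u * a u) + ln cc).
  { unfold KL. rewrite (sumU_ext n _ (fun u => P u * a u + ln cc * P u)).
    rewrite sumU_plus, sumU_scal, HPsum. ring.
    intros u Hu. rewrite HlnPQ by auto. ring. }
  assert (HKL2 : KL n Q P <= - ln cc).
  { unfold KL. replace (- ln cc) with (- ln cc * sumU n Q) by (rewrite HQsum; ring).
    rewrite <- sumU_scal. apply sumU_le. intros u Hu. rewrite HlnQP by auto.
    specialize (Ha u Hu). specialize (HQpos u). nra. }
  assert (Hred : redundancy n d P l * ln (INR d) = sumU n (fun u => P u * a u)).
  { unfold redundancy.
    rewrite (sumU_ext n (fun u => P u * a u) (fun u => ln (INR d) * (P u * INR (l u)) +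
       ln (INR d) * (P u * logb d (P u)))).
    rewrite sumU_plus, !sumU_scal. ring.
    intros u Hu. unfold a, logb. field. lra. }
  set (x := redundancy n d P l * ln (INR d) / 2).
  assert (Hx0 : 0 <= x).
  { unfold x. rewrite Hred. assert (0 <= sumU n (fun u => P u * a u)); [|lra].
    apply sumU_nonneg. intros u Hu. specialize (Ha u Hu). specialize (HPpos u Hu). nra. }
  assert (HJ : Jeff n P Q <= x).
  { unfold Jeff, x. rewrite Hred, HKL1. lra. }
  split. exact HJ.
  destruct (epsilon_spec (inhabits 0) (eps_spec x) (eps_exists x Hx0)) as [He Hfe].
  fold (eps_fun x) in He, Hfe. set (e := eps_fun x) in *.
  set (s := fun u => if Rle_dec (Q u) (P u) then true else false).
  set (p := sumU n (fun u => if s u then P u else 0)).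
  set (q := sumU n (fun u => if s u then Q u else 0)).
  set (p' := sumU n (fun u => if s u then 0 else P u)).
  set (q' := sumU n (fun u => if s u then 0 else Q u)).
  assert (Hpp : p + p' = 1) by (rewrite <- HPsum; unfold p, p'; rewrite <- sel_split; auto).
  assert (Hqq : q + q' = 1) by (rewrite <- HQsum; unfold q, q'; rewrite <- sel_split; auto).
  assert (Habs : sumU n (fun u => Rabs (P u - Q u)) = 2 * (p - q)).
  { rewrite (sumU_ext n _ (fun u => if s u then 1 * P u + (-1) * Q u else (-1) * P u + 1 * Q u)).
    rewrite sel_lin. fold p q p' q'. lra.
    intros u Hu. unfold s. destruct (Rle_dec (Q u) (P u)).
    rewrite Rabs_right; lra. rewrite Rabs_left; lra. }
  fold Q. rewrite Habs.
  assert (Hnn : 0 <= sumU n (fun u => Rabs (P u - Q u))) by (apply sumU_nonneg; intros; apply Rabs_pos).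
  rewrite Habs in Hnn.
  set (dl := p - q).
  assert (Hp'0 : 0 <= p') by (apply sumU_nonneg; intros u Hu; destruct (s u); [lra | left; auto]).
  assert (Hq0 : 0 <= q) by (apply sumU_nonneg; intros u Hu; destruct (s u); [left; auto | lra]).
  assert (Hdl0 : 0 <= dl) by (unfold dl; lra).
  destruct Hdl0 as [Hdl|D0]; [| rewrite <- D0; lra].
  assert (Hp : 0 < p) by (unfold dl in Hdl; lra).
  assert (Hq : 0 < q).
  { apply sel_ex_pos; auto. apply (sel_pos_ex n s P). exact Hp. }
  assert (Hq' : 0 < q') by (unfold dl in Hdl; lra).
  assert (Hp' : 0 < p').
  { apply sel_ex_pos'; auto. apply (sel_pos_ex' n s Q). exact Hq'. }
  assert (Hdl1 : dl < 1) by (unfold dl; lra).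
  set (L1 := ln (p / q)). set (L2 := ln (p' / q')).
  assert (H2J : dl * (L1 - L2) <= 2 * Jeff n P Q).
  { unfold Jeff. replace (2 * ((KL n P Q + KL n Q P) / 2)) with (KL n P Q + KL n Q P) by field.
    unfold KL. rewrite <- sumU_plus.
    assert (Hs : sumU n (fun u => if s u then (L1 + 1 - q / p) * P u + (- L1 + 1 - p / q) * Q u
                 else (L2 + 1 - q' / p') * P u + (- L2 + 1 - p' / q') * Q u) = dl * (L1 - L2)).
    { rewrite sel_lin. fold p q p' q'. unfold dl.
      replace p' with (1 - p) in * by lra. replace q' with (1 - q) in * by lra.
      field. repeat split; lra. }
    rewrite <- Hs. apply sumU_le. intros u Hu.
    destruct (s u); apply key; auto. }
  assert (HL : 2 * ln ((1 + dl) / (1 - dl)) <= L1 - L2).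
  { set (r := (1 + dl) / (1 - dl)).
    assert (Hr : 0 < r) by (apply Rdiv_lt_0_compat; lra).
    replace (2 * ln r) with (ln (r * r)) by (rewrite ln_mult; auto; ring).
    replace (L1 - L2) with (ln ((p * q') / (q * p'))).
    apply ln_le'. nra.
    replace (r * r) with ((1 + dl) * (1 + dl) / ((1 - dl) * (1 - dl))) by (unfold r; field; lra).
    apply div_le. nra. nra.
    assert (E : (p * q') * ((1 - dl) * (1 - dl)) - (1 + dl) * (1 + dl) * (q * p')
               = dl * (2 * q - 1 + dl) ^ 2) by (unfold dl; replace p' with (1 - p) by lra;
                                                 replace q' with (1 - q) by lra; ring).
    assert (0 <= dl * (2 * q - 1 + dl) ^ 2) by (apply Rmult_le_pos; [lra | apply pow2_ge_0]).
    lra.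
    unfold L1, L2. replace (p * q' / (q * p')) with ((p / q) * / (p' / q')) by (field; lra).
    rewrite ln_mult, ln_Rinv; try apply Rdiv_lt_0_compat; auto; try apply Rinv_0_lt_compat;
      try apply Rdiv_lt_0_compat; auto; try ring. }
  assert (Hfd : fe dl <= fe e).
  { unfold fe. rewrite Hfe. nra. }
  destruct (Rle_or_lt dl e) as [Hle|Hlt]. lra.
  exfalso. pose proof (fe_mono e dl ltac:(lra) Hlt Hdl1). lra.
Qed.
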